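(* Let $\mathcal{S}$ be an abstract numeration system and $Y\subseteq\mathbb{N}^{\mathbb{N}}$. Then $Y$ is weakly $\mathcal{S}$-codable if and only if $P_v(Y)$ is $\mathcal{S}$-recognizable for every finite word $v$ over $\mathbb{N}_{>0}$.
   Context: ANS: $\mathcal{S}=(L,\prec)$ with $L$ an infinite language over a finite alphabet $\Sigma$ and $\prec$ a total order on $L$ of order type $\omega$; $\mathrm{rep}(n)$ is the $n$-th word of $L$ (from $n=0$). For $(n_1,\dots,n_d)\in\mathbb{N}^d$, $\mathrm{rep}(n_1,\dots,n_d)$ is the word over $(\Sigma\cup\{\#\})^d$ obtained by left-padding each $\mathrm{rep}(n_i)$ with a new symbol $\#$ to the maximal length. $Z\subseteq\mathbb{N}^d$ is $\mathcal{S}$-recognizable if $\mathrm{rep}(Z)$ is regular. For $\mathbf{y}\in\mathbb{N}^{\mathbb{N}}$: $\sum\mathbf{y}=\sum_iy_i$; if $\sum\mathbf{y}=d<\infty$, $\nu(\mathbf{y})$ is the unique $(n_1,\dots,n_d)$ with $n_1\le\dots\le n_d$ and $y_j=|\{k:n_k=j\}|$ for all $j$. $Y$ is weakly $\mathcal{S}$-codable if for every $k$ the set $\{\nu(\mathbf{y}):\mathbf{y}\in Y,\sum\mathbf{y}\le k\}$ has $\mathcal{S}$-recognizable intersection with each $\mathbb{N}^i$. For $\mathbf{y}$ with finite support, $s(\mathbf{y})=(n_1,\dots,n_k)$ lists the support $\{n:y_n\ne0\}$ in increasing order, and $e(\mathbf{y})$ is the word obtained from $\mathbf{y}$ by erasing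 all $0$'s. For $v\in\mathbb{N}_{>0}^*$: $Q_v(Y)=\{\mathbf{y}\in Y:e(\mathbf{y})=v\}$ and $P_v(Y)=s(Q_v(Y))\subseteq\mathbb{N}^{|v|}$. *)

(* Defs.v *)
From mathcomp Require Import all_boot.
Set Implicit Arguments. Unset Strict Implicit. Unset Printing Implicit Defensive.

Record dfa (A : finType) := DFA {
  dfa_state : finType;
  dfa_start : dfa_state;
  dfa_final : pred dfa_state;
  dfa_trans : dfa_state -> A -> dfa_state }.

Definition dfa_accepts (A : finType) (M : dfa A) (w : seq A) : bool :=
  @dfa_final A M (foldl (@dfa_trans A M) (@dfa_start A M) w).

Definition regular (A : finType) (Lang : seq A -> Prop) : Prop :=
  exists M : dfa A, forall w, Lang w <-> dfa_accepts M w.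

(* S = (L, prec): L an infinite language over Sigma, prec a total order on L
   of order type omega.  [ans_rep n] is the n-th word of L (from n = 0); the
   axioms say that rep enumerates L and is an order isomorphism
   (N,<) -> (L,prec), which is exactly "L infinite and prec of type omega". *)
Record ANS (Sigma : finType) := MkANS {
  ans_L : seq Sigma -> Prop;
  ans_prec : seq Sigma -> seq Sigma -> Prop;
  ans_rep : nat -> seq Sigma;
  ans_rep_L : forall n, ans_L (ans_rep n);
  ans_L_rep : forall w, ans_L w -> exists n, ans_rep n = w;
  ans_rep_prec : forall n m, ans_prec (ans_rep n) (ans_rep m) <-> n < m }.

Section Padding.
Variables (Sigma : finType) (S : ANS Sigma).

(* letter j of the word w left-padded with # (= None) to length M *)
Definition pad_letter (M : nat) (w : seq Sigma) (j : nat) : option Sigma :=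
  if j < M - size w then None else nth None (map Some w) (j - (M - size w)).

Definition rep_tuple (d : nat) (t : d.-tuple nat) : seq {ffun 'I_d -> option Sigma} :=
  let M := \max_(i < d) size (@ans_rep Sigma S (tnth t i)) in
  [seq [ffun i => pad_letter M (@ans_rep Sigma S (tnth t i)) j] | j <- iota 0 M].

Definition recognizable (d : nat) (Z : d.-tuple nat -> Prop) : Prop :=
  regular (fun w => exists t, Z t /\ w = rep_tuple t).
End Padding.

Definition sum_le (y : nat -> nat) (k : nat) : Prop :=
  exists N, (forall i, N <= i -> y i = 0) /\ \sum_(i < N) y i <= k.

Definition is_nu (y : nat -> nat) (d : nat) (t : d.-tuple nat) : Prop :=
  sorted leq t /\ forall j, y j = count_mem j t.

Definition weakly_codable (Sigma : finType) (S : ANS Sigma)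
    (Y : (nat -> nat) -> Prop) : Prop :=
  forall k i, recognizable S (fun t : i.-tuple nat =>
    exists y, Y y /\ sum_le y k /\ is_nu y t).

Definition supp_below (y : nat -> nat) (N : nat) : Prop :=
  forall i, N <= i -> y i = 0.

(* s(y) and e(y), computed with a support bound N (independent of N) *)
Definition s_of (y : nat -> nat) (N : nat) : seq nat :=
  [seq i <- iota 0 N | y i != 0].
Definition e_of (y : nat -> nat) (N : nat) : seq nat :=
  [seq y i | i <- iota 0 N & y i != 0].

(* P_v(Y) = s(Q_v(Y)) subset of N^|v|, Q_v(Y) = {y in Y | e(y) = v} *)
Definition P_v (v : seq nat) (Y : (nat -> nat) -> Prop) : (size v).-tuple nat -> Prop :=
  fun t => exists y N, Y y /\ supp_below y N /\ e_of y N = v /\ s_of y N = val t.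

(* Main.v *)
Require Import Defs.
From mathcomp Require Import all_boot zify.
Set Implicit Arguments. Unset Strict Implicit. Unset Printing Implicit Defensive.

Lemma regular_ext (A : finType) (L1 L2 : seq A -> Prop) :
  (forall w, L1 w <-> L2 w) -> regular L1 -> regular L2.
Proof. move=> H [M HM]; exists M => w; split => [/H/HM|/HM/H] //. Qed.

Lemma regular_empty (A : finType) : regular (fun _ : seq A => False).
Proof. by exists (@DFA A unit tt (fun _ => false) (fun q _ => q)). Qed.

Lemma foldl_pair (A S1 S2 : Type) (t1 : S1 -> A -> S1) (t2 : S2 -> A -> S2) w q1 q2 :
  foldl (fun q a => (t1 q.1 a, t2 q.2 a)) (q1, q2) w = (foldl t1 q1 w, foldl t2 q2 w).
Proof. by elim: w q1 q2 => //= a w IH q1 q2; rewrite IH. Qed.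

Definition dprod (A : finType) (M1 M2 : dfa A) (op : bool -> bool -> bool) : dfa A :=
  @DFA A (prod (dfa_state M1) (dfa_state M2)) (dfa_start M1, dfa_start M2)
  (fun q => op (dfa_final q.1) (dfa_final q.2))
  (fun q a => (dfa_trans q.1 a, dfa_trans q.2 a)).

Lemma dprodE (A : finType) (M1 M2 : dfa A) op w :
  dfa_accepts (dprod M1 M2 op) w = op (dfa_accepts M1 w) (dfa_accepts M2 w).
Proof. by rewrite /dfa_accepts /= foldl_pair. Qed.

Lemma regular_union (A : finType) (L1 L2 : seq A -> Prop) :
  regular L1 -> regular L2 -> regular (fun w => L1 w \/ L2 w).
Proof.
move=> [M1 H1] [M2 H2]; exists (dprod M1 M2 orb) => w; rewrite dprodE.
split => [[/H1->|/H2->] |/orP[/H1|/H2]]; rewrite ?orbT; auto.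
Qed.

Lemma regular_inter (A : finType) (L1 L2 : seq A -> Prop) :
  regular L1 -> regular L2 -> regular (fun w => L1 w /\ L2 w).
Proof.
move=> [M1 H1] [M2 H2]; exists (dprod M1 M2 andb) => w; rewrite dprodE.
by split => [[/H1-> /H2->]|/andP[/H1 ? /H2 ?]].
Qed.

Lemma regular_preim (A B : finType) (h : A -> B) (L : seq B -> Prop) :
  regular L -> regular (fun w => L (map h w)).
Proof.
move=> [M H]; exists (@DFA A (dfa_state M) (dfa_start M) (@dfa_final _ M)
  (fun q a => dfa_trans q (h a))) => w.
rewrite /dfa_accepts /=; suff <- : forall q, foldl (dfa_trans (d:=M)) q (map h w) =
  foldl (fun q a => dfa_trans q (h a)) q w by apply: H.
by elim: w => //= a w IH q; rewrite IH.
Qed.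

Section Image.
Variables (A B : finType) (h : A -> B) (hinj : injective h) (M : dfa A).
Definition itrans (o : option (dfa_state M)) (b : B) : option (dfa_state M) :=
  match o with
  | Some q => match [pick a | h a == b] with Some a => Some (dfa_trans q a) | None => None end
  | None => None end.

Lemma itrans_None w : foldl itrans None w = None.
Proof. by elim: w. Qed.

Lemma itrans_map q u : foldl itrans (Some q) (map h u) = Some (foldl (dfa_trans (d:=M)) q u).
Proof.
elim: u q => //= a u IH q; rewrite /itrans -/itrans.
case: pickP => [a' /eqP /hinj -> | /(_ a)]; first exact: IH.
by rewrite eqxx.
Qed.

Lemma itrans_inv q w q' : foldl itrans (Some q) w = Some q' ->
  exists u, w = map h u /\ q' = foldl (dfa_trans (d:=M)) q u.
Proof.
elim: w q => [|b w IH] q /=; first by move=> [<-]; exists [::].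
rewrite /itrans -/itrans; case: pickP => [a /eqP <- | _]; last by rewrite itrans_None.
by move=> /IH [u [-> ->]]; exists (a :: u).
Qed.
End Image.

Lemma regular_image (A B : finType) (h : A -> B) (L : seq A -> Prop) :
  injective h -> regular L -> regular (fun w => exists u, L u /\ w = map h u).
Proof.
move=> hinj [M H].
exists (@DFA B (option (dfa_state M)) (Some (dfa_start M))
  (fun o => if o is Some q then dfa_final q else false) (@itrans A B h M)) => w.
rewrite /dfa_accepts /=; split.
- by move=> [u [/H Hu ->]]; rewrite itrans_map.
- case E: (foldl _ _ w) => [q|//] Hq.
  move/itrans_inv: E => [u [-> Eq]]; exists u; split => //.
  by apply/H; rewrite /dfa_accepts -Eq.
Qed.

Lemma regular_set (A : finType) (Q : pred {set A}) :
  regular (fun w => Q [set a | a \in w]).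
Proof.
exists (@DFA A {set A} set0 Q (fun S a => a |: S)) => w.
rewrite /dfa_accepts /=.
suff -> : forall S, foldl (fun S a => a |: S) S w = S :|: [set a | a \in w].
  by rewrite set0U.
elim: w => [|a w IH] S /=.
  by apply/setP => x; rewrite !inE orbF.
rewrite IH; apply/setP => x; rewrite !inE.
by case: (x == a); rewrite ?orbT.
Qed.

Section Rep.
Variables (Sigma : finType) (S : ANS Sigma).
Notation rep := (@ans_rep Sigma S).

Lemma rep_inj n m : rep n = rep m -> n = m.
Proof.
move=> E; apply/eqP; rewrite eqn_leq; apply/andP; split; rewrite leqNgt; apply/negP => H.
- have := proj2 (ans_rep_prec S m n) H; rewrite E => /(ans_rep_prec S) ; by rewrite ltnn.
- have := proj2 (ans_rep_prec S n m) H; rewrite E => /(ans_rep_prec S) ; by rewrite ltnn.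
Qed.

Definition maxlen d (t : d.-tuple nat) := \max_(i < d) size (rep (tnth t i)).

Lemma map_const' (T U : Type) (c : U) (s : seq T) : map (fun _ => c) s = nseq (size s) c.
Proof. by elim: s => //= a s ->. Qed.

Lemma map_pad M (u : seq Sigma) : size u <= M ->
  map (pad_letter M u) (iota 0 M) = nseq (M - size u) None ++ map Some u.
Proof.
move=> Hu; rewrite -[in iota _ M](subnK Hu) iotaD map_cat add0n; congr (_ ++ _).
- rewrite -[in RHS](size_iota 0 (M - size u)) -(map_const' None).
  apply/eq_in_map => j; rewrite mem_iota add0n /pad_letter => /andP[_ ->]; done.
- rewrite -[M - size u]addn0 iotaDl -map_comp -[in RHS](mkseq_nth None (map Some u)) size_map.
  apply/eq_map => j /=; rewrite /pad_letter.
  by rewrite ltnNge leq_addr /= addKn.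
Qed.

Lemma size_le_max d (t : d.-tuple nat) x : size (rep (tnth t x)) <= maxlen t.
Proof. rewrite /maxlen; exact: (leq_bigmax (F := fun i => size (rep (tnth t i)))). Qed.

Lemma col_rep d (t : d.-tuple nat) (x : 'I_d) :
  map (fun a : {ffun 'I_d -> option Sigma} => a x) (rep_tuple S t) =
  nseq (maxlen t - size (rep (tnth t x))) None ++ map Some (rep (tnth t x)).
Proof.
rewrite /rep_tuple -map_comp -map_pad ?size_le_max //.
by apply/eq_map => j /=; rewrite ffunE.
Qed.

Lemma pmap_pad n (u : seq Sigma) : pmap id (nseq n None ++ map Some u) = u.
Proof. by elim: n => [|n IH] //=; elim: u => //= a u ->. Qed.

Lemma col_eq d (t : d.-tuple nat) (x y : 'I_d) :
  map (fun a : {ffun 'I_d -> option Sigma} => a x) (rep_tuple S t) = map (fun a : {ffun 'I_d -> option Sigma} => a y) (rep_tuple S t) ->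
  tnth t x = tnth t y.
Proof. by rewrite !col_rep => /(congr1 (pmap id)); rewrite !pmap_pad => /rep_inj. Qed.

Lemma has_col d (w : seq {ffun 'I_d -> option Sigma}) (x y : 'I_d) :
  has (fun a : {ffun 'I_d -> option Sigma} => a x != a y) w = (map (fun a : {ffun 'I_d -> option Sigma} => a x) w != map (fun a : {ffun 'I_d -> option Sigma} => a y) w).
Proof.
by elim: w => //= a w ->; rewrite eqseq_cons; case: eqP.
Qed.

Definition rx i m (f : 'I_i -> 'I_m) (a : {ffun 'I_m -> option Sigma}) :
  {ffun 'I_i -> option Sigma} := [ffun k => a (f k)].

Definition pushT i m (s : m.-tuple nat) (f : 'I_i -> 'I_m) : i.-tuple nat :=
  [tuple tnth s (f k) | k < i].

Lemma R1 i m (f : 'I_i -> 'I_m) (fs : forall j, exists k, f k = j) (s : m.-tuple nat) :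
  rep_tuple S (pushT s f) = map (rx f) (rep_tuple S s).
Proof.
have EM : maxlen (pushT s f) = maxlen s.
  apply/eqP; rewrite eqn_leq; apply/andP; split.
  - apply/bigmax_leqP => k _; rewrite tnth_mktuple; exact: size_le_max.
  - apply/bigmax_leqP => j _; have [k <-] := fs j.
    have := size_le_max (pushT s f) k; by rewrite tnth_mktuple.
rewrite /rep_tuple -/(maxlen (pushT s f)) -/(maxlen s) EM -map_comp.
apply/eq_map => j /=; apply/ffunP => k; by rewrite !ffunE tnth_mktuple.
Qed.

Lemma rx_inj i m (f : 'I_i -> 'I_m) (g : 'I_m -> 'I_i) (fg : forall j, f (g j) = j) :
  injective (rx f).
Proof.
move=> a b E; apply/ffunP => j; rewrite -[j]fg.
by have := congr1 (fun c : {ffun 'I_i -> option Sigma} => c (g j)) E; rewrite !ffunE.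
Qed.

Lemma R2 i m (f : 'I_i -> 'I_m) (g : 'I_m -> 'I_i) (fg : forall j, f (g j) = j)
  (w : seq {ffun 'I_m -> option Sigma}) (t : i.-tuple nat) :
  map (rx f) w = rep_tuple S t ->
  exists s : m.-tuple nat, w = rep_tuple S s /\ t = pushT s f.
Proof.
move=> Ew; pose s := [tuple tnth t (g j) | j < m]; exists s.
have fs : forall j, exists k, f k = j by move=> j; exists (g j).
have Et : t = pushT s f.
  apply: eq_from_tnth => k; rewrite !tnth_mktuple.
  apply: col_eq; rewrite -Ew -!map_comp; apply/eq_map => a /=.
  by rewrite !ffunE fg.
split=> //; apply: (inj_map (rx_inj fg)); by rewrite Ew -R1 -?Et.
Qed.
End Rep.

Fixpoint push (v s : seq nat) : seq nat :=
  match v, s with b :: v', a :: s' => nseq b a ++ push v' s' | _, _ => [::] end.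

Lemma mem_push v s x : x \in push v s -> x \in s.
Proof.
elim: v s => [|b v IH] [|a s] //=; rewrite mem_cat inE => /orP[/nseqP[-> _]|/IH ->];
  by rewrite ?eqxx ?orbT.
Qed.

Lemma mem_push_pos v s x : all (fun x => 0 < x) v -> size s = size v ->
  x \in s -> x \in push v s.
Proof.
elim: v s => [|b v IH] [|a s] //= /andP[b0 pv] [Es]; rewrite inE mem_cat => /orP[/eqP->|/IH->] //.
  by apply/orP; left; apply/nseqP.
by rewrite orbT.
Qed.

Lemma size_push v s : size s = size v -> size (push v s) = sumn v.
Proof. by elim: v s => [|b v IH] [|a s] //= [/IH]; rewrite size_cat size_nseq => ->. Qed.

Lemma map_push h v s : map h (push v s) = push v (map h s).
Proof. by elim: v s => [|b v IH] [|a s] //=; rewrite map_cat map_nseq IH. Qed.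

Lemma count_push v s x : uniq s -> size s = size v ->
  count_mem x (push v s) = nth 0 v (index x s).
Proof.
elim: v s => [|b v IH] [|a s] //= /andP[aS us] [Es].
rewrite count_cat IH // count_nseq /=.
case: (eqVneq a x) => [<-|ne] /=.
    rewrite (memNindex aS) Es nth_default //=; lia.
rewrite /=; lia.
Qed.

Lemma sorted_push v s : sorted leq s -> sorted leq (push v s).
Proof.
rewrite !(sorted_pairwise leq_trans).
elim: v s => [|b v IH] [|a s] //= /andP[al ps].
rewrite pairwise_cat IH // andbT; apply/andP; split.
  apply/allrelP => x y /nseqP[-> _] /mem_push ys; exact: (allP al).
elim: b => //= b ->; rewrite andbT; apply/allP => z /nseqP[-> _]; done.
Qed.

Lemma push_sorted_inv v s : all (fun x => 0 < x) v -> size s = size v ->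
  sorted leq (push v s) -> sorted leq s.
Proof.
rewrite !(sorted_pairwise leq_trans).
elim: v s => [|b v IH] [|a s] //= /andP[b0 pv] [Es].
rewrite pairwise_cat => /and3P[ar _ pp]; rewrite IH // andbT.
apply/allP => x xs; move/allrelP: ar; apply.
  by case: b b0 => //= b _; rewrite inE eqxx.
exact: mem_push_pos.
Qed.

Lemma consec_sorted s : sorted leq s ->
  (forall j, j.+1 < size s -> nth 0 s j != nth 0 s j.+1) -> sorted ltn s.
Proof.
elim: s => [|a s IH] //=; case: s IH => [|b s] IH //= /andP[ab ps] H.
apply/andP; split; first by rewrite ltn_neqAle ab andbT (H 0).
by apply: (IH ps) => j Hj; apply: (H j.+1).
Qed.

Lemma sum_count N (t : seq nat) : \sum_(n < N) count_mem (n : nat) t = count (fun x => x < N) t.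
Proof.
elim: N => [|N IH]; first by rewrite big_ord0 count_pred0.
rewrite big_ord_recr /= IH; clear IH.
elim: t => //= x t <-; rewrite ltnS leq_eqVlt orbC eq_sym.
case: (ltngtP x N) => /= H; try lia; subst x; rewrite eqxx /=; lia.
Qed.

Lemma filter_iota_eq s N : sorted ltn s -> all (fun x => x < N) s ->
  [seq n <- iota 0 N | n \in s] = s.
Proof.
move=> ss aN; apply: (irr_sorted_eq ltn_trans ltnn) => //.
  by apply: sorted_filter; [exact: ltn_trans | exact: iota_ltn_sorted].
move=> x; rewrite mem_filter mem_iota /=; case xs: (x \in s) => //=.
by rewrite (allP aN).
Qed.

Lemma mem_le_sumn (t : seq nat) x : x \in t -> x <= sumn t.
Proof. elim: t => //= a t IH; rewrite inE => /orP[/eqP->|/IH]; lia. Qed.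

Lemma supp_nu y (t : seq nat) : (forall j, y j = count_mem j t) -> supp_below y (sumn t).+1.
Proof.
move=> Hy j Hj; rewrite Hy; apply/count_memPn/negP => /mem_le_sumn; lia.
Qed.

Lemma sum_le_nu y (t : seq nat) k : (forall j, y j = count_mem j t) ->
  (sum_le y k <-> size t <= k).
Proof.
move=> Hy; split.
- move=> [N [supp le]]; move: le.
  rewrite (eq_bigr (fun n : 'I_N => count_mem (n : nat) t)); last by move=> n _; exact: Hy.
  rewrite sum_count; suff /eqP -> : count (fun x => x < N) t == size t by [].
  rewrite -all_count; apply/allP => x xt; rewrite ltnNge; apply/negP => /supp.
  by rewrite Hy => /count_memPn; rewrite xt.
- move=> le; exists (sumn t).+1; split; first exact: supp_nu.
  rewrite (eq_bigr (fun n : 'I_(sumn t).+1 => count_mem (n : nat) t)); last by move=> n _; exact: Hy.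
  rewrite sum_count; suff /eqP -> : count (fun x => x < (sumn t).+1) t == size t by [].
  by rewrite -all_count; apply/allP => x /mem_le_sumn.
Qed.

Lemma PtoN y N : supp_below y N ->
  [/\ all (fun x => 0 < x) (e_of y N), size (s_of y N) = size (e_of y N),
      sorted ltn (s_of y N), sorted leq (push (e_of y N) (s_of y N))
    & forall j, y j = count_mem j (push (e_of y N) (s_of y N))].
Proof.
move=> supp.
have ss : sorted ltn (s_of y N).
  by apply: sorted_filter; [exact: ltn_trans | exact: iota_ltn_sorted].
have Esz : size (s_of y N) = size (e_of y N) by rewrite /e_of /s_of size_map.
split => //.
- apply/allP => x /mapP [n]; rewrite mem_filter => /andP[n0 _] ->; by rewrite lt0n.
- by apply: sorted_push; apply: (sub_sorted _ ss) => a b /ltnW.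
- move=> j; rewrite count_push //; last exact: (sorted_uniq ltn_trans ltnn).
  case js: (j \in s_of y N).
    rewrite /e_of -/(s_of y N) (nth_map 0) ?index_mem // nth_index //.
  rewrite nth_default; last by rewrite -Esz memNindex ?js.
  move: js; rewrite /s_of mem_filter mem_iota /= add0n.
  case: (leqP N j) => [/supp -> //|jN]; rewrite andbT; by move/negbFE/eqP.
Qed.

Lemma NtoP y v s : all (fun x => 0 < x) v -> size s = size v ->
  (forall j, j.+1 < size s -> nth 0 s j != nth 0 s j.+1) ->
  sorted leq (push v s) -> (forall j, y j = count_mem j (push v s)) ->
  exists N, [/\ supp_below y N, e_of y N = v & s_of y N = s].
Proof.
move=> pv Es cd sp Hy.
have ss : sorted ltn s by apply: consec_sorted => //; exact: push_sorted_inv sp.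
have us : uniq s := sorted_uniq ltn_trans ltnn ss.
have Hy' : forall n, y n = nth 0 v (index n s) by move=> n; rewrite Hy count_push.
have ynz : forall n, (y n != 0) = (n \in s).
  move=> n; rewrite Hy'; case ns: (n \in s).
    by rewrite -lt0n; apply: (allP pv); apply: mem_nth; rewrite -Es index_mem.
  by rewrite nth_default ?eqxx // -Es memNindex ?ns.
have Es' : s_of y (sumn s).+1 = s.
  rewrite /s_of (eq_filter ynz); apply: filter_iota_eq => //.
  by apply/allP => x /mem_le_sumn.
exists (sumn s).+1; split => //.
- move=> j Hj; rewrite Hy count_push // nth_default // -Es memNindex //.
  by apply/negP => /mem_le_sumn; lia.
- rewrite /e_of -/(s_of y _) Es'.
  apply: (@eq_from_nth _ 0); first by rewrite size_map.
  move=> j; rewrite size_map => Hj; rewrite (nth_map 0) // Hy' index_uniq //.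
Qed.

Lemma regular_bigunion (A : finType) (T : eqType) (vs : seq T) (L : T -> seq A -> Prop) :
  (forall v, v \in vs -> regular (L v)) -> regular (fun w => exists v, v \in vs /\ L v w).
Proof.
elim: vs => [|v vs IH] H.
  by apply: regular_ext (regular_empty A) => w; split => // [[v []]].
apply: regular_ext (regular_union (H v (mem_head _ _)) (IH _)) => [w|]; last first.
  by move=> u uvs; apply: H; rewrite inE uvs orbT.
split.
- by move=> [Lw|[u [uvs Lw]]]; [exists v; rewrite mem_head | exists u; rewrite inE uvs orbT].
- move=> [u []]; rewrite inE => /orP[/eqP->|uvs] Lw; [left|right; exists u]; done.
Qed.

Fixpoint allseqs n b : seq (seq nat) :=
  if n is n'.+1 then [seq x :: s | x <- iota 0 b, s <- allseqs n' b] else [:: [::]].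

Lemma mem_allseqs n b v : size v = n -> all (fun x => x < b) v -> v \in allseqs n b.
Proof.
elim: n v => [|n IH] [|x v] //= [Ev] /andP[xb vb].
by apply: allpairs_f; [rewrite mem_iota | exact: IH].
Qed.

Definition comps i := [seq v <- flatten [seq allseqs n i.+1 | n <- iota 0 i.+1]
  | all (fun x => 0 < x) v && (sumn v == i)].

Lemma mem_comps i v : all (fun x => 0 < x) v -> sumn v = i -> v \in comps i.
Proof.
move=> pv Ev; rewrite mem_filter pv Ev eqxx !andTb.
apply/flatten_mapP.
exists (size v); last apply: mem_allseqs => //.
  rewrite mem_iota /= add0n ltnS -Ev; elim: v pv {Ev} => //= a v IH /andP[a0 /IH]; lia.
by apply/allP => x /mem_le_sumn; rewrite Ev ltnS.
Qed.

Definition idxs v := push v (iota 0 (size v)).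

Lemma size_idxs v : size (idxs v) = sumn v.
Proof. by rewrite size_push // size_iota. Qed.

Lemma fv_proof v i (Ei : sumn v = i) (k : 'I_i) : nth 0 (idxs v) k < size v.
Proof.
have : nth 0 (idxs v) k \in idxs v by rewrite mem_nth // size_idxs Ei.
by move/mem_push; rewrite mem_iota.
Qed.

Definition fv v i (Ei : sumn v = i) (k : 'I_i) : 'I_(size v) := Ordinal (fv_proof Ei k).

Lemma fv_surj v i (Ei : sumn v = i) : all (fun x => 0 < x) v ->
  forall j, exists k, fv Ei k = j.
Proof.
move=> pv j.
have ji : (j : nat) \in idxs v.
  by apply: mem_push_pos; rewrite ?size_iota // mem_iota /=.
have Hk : index (j : nat) (idxs v) < i by rewrite -Ei -size_idxs index_mem.
by exists (Ordinal Hk); apply: val_inj; rewrite /= nth_index.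
Qed.

Lemma section_of i m (f : 'I_i -> 'I_m) : (forall j, exists k, f k = j) ->
  exists g : 'I_m -> 'I_i, forall j, f (g j) = j.
Proof.
move=> H; have H' : forall j, exists k, f k == j by move=> j; have [k e] := H j; exists k; apply/eqP.
by exists (fun j => xchoose (H' j)) => j; apply/eqP/(xchooseP (H' j)).
Qed.

Lemma val_pushT (Sigma : finType) v i (Ei : sumn v = i) (s : (size v).-tuple nat) :
  val (pushT s (fv Ei)) = push v s.
Proof.
rewrite /pushT /= -[in RHS](mkseq_nth 0 s) size_tuple /mkseq -map_push.
rewrite -/(idxs v) -[in RHS](mkseq_nth 0 (idxs v)) /mkseq size_idxs Ei -map_comp.
rewrite -val_enum_ord -map_comp.
by apply: eq_map => k /=; rewrite (tnth_nth 0).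
Qed.

Lemma col_neq (Sigma : finType) (S : ANS Sigma) d (s : d.-tuple nat) (x y : 'I_d) :
  tnth s x != tnth s y ->
  exists2 a, a \in rep_tuple S s & a x != a y.
Proof.
move=> ne; apply/hasP; rewrite has_col; apply/negP => /eqP /col_eq E.
by rewrite E eqxx in ne.
Qed.

Lemma neq_col (Sigma : finType) (S : ANS Sigma) d (s : d.-tuple nat) (x y : 'I_d) a :
  a \in rep_tuple S s -> a x != a y -> tnth s x != tnth s y.
Proof.
move=> ain ne; apply/negP => /eqP E.
suff : ~~ has (fun a : {ffun 'I_d -> option Sigma} => a x != a y) (rep_tuple S s).
  by move/hasPn/(_ a ain); rewrite ne.
by rewrite has_col !col_rep E eqxx.
Qed.

Theorem mainTheorem5 (Sigma : finType) (S : ANS Sigma) (Y : (nat -> nat) -> Prop) :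
  weakly_codable S Y <->
  (forall v : seq nat, all (fun x => 0 < x) v -> recognizable S (@P_v v Y)).
Proof.
split.
- move=> WC v pv.
  set i := sumn v.
  pose f := fv (erefl i).
  have fs : forall j, exists k, f k = j := fv_surj (erefl i) pv.
  have [g fg] := section_of fs.
  pose Q := fun A : {set {ffun 'I_(size v) -> option Sigma}} =>
    [forall j : 'I_(size v), forall j' : 'I_(size v), (val j' == (val j).+1) ==> [exists a in A, a j != a j']].
  have R := regular_inter (regular_preim (rx f) (WC i i)) (regular_set Q).
  apply: regular_ext R => w; split.
  + move=> [[t [[y [Yy [sl nu]]] Ew]] Qw].
    have [s [Hw Et]] := R2 fg Ew; subst w.
    exists s; split => //.
    have Evt : val t = push v s by rewrite Et val_pushT.
    have [N [supp ev sv]] : exists N, [/\ supp_below y N, e_of y N = v & s_of y N = s].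
      apply: NtoP => //; first by rewrite size_tuple.
      * move=> j Hj.
        have Hj' : j < size v by rewrite -(size_tuple s); lia.
        have Hj1 : j.+1 < size v by rewrite -(size_tuple s).
        move/forallP: Qw => /(_ (Ordinal Hj')) /forallP /(_ (Ordinal Hj1)) /=.
        rewrite eqxx /= => /existsP [a /andP [ain ne]].
        rewrite inE in ain.
        have := neq_col ain ne; by rewrite !(tnth_nth 0).
      * by rewrite -Evt; case: nu.
      * by move=> j; rewrite -Evt; case: nu => _ ->.
    by exists y, N.
  + move=> [s [[y [N [Yy [supp [ev sv]]]]] ->]].
    have [pe Esz ss sp cnt] := PtoN supp.
    rewrite ev sv in pe Esz ss sp cnt.
    split.
    * exists (pushT s f); split; last by rewrite R1.
      exists y; split => //.
      have Evt : val (pushT s f) = push v s by rewrite val_pushT.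
      split; last by split; rewrite Evt.
      apply/(sum_le_nu _ cnt); by rewrite size_push ?size_tuple.
    * apply/forallP => j; apply/forallP => j'; apply/implyP => /eqP Ej.
      have : tnth s j != tnth s j'.
        rewrite !(tnth_nth 0); rewrite neq_ltn; apply/orP; left.
        apply: (sorted_ltn_nth ltn_trans 0 ss); rewrite ?inE ?size_tuple ?Ej //.
        by rewrite -Ej ltn_ord.
      move/(col_neq S) => [a ain ne]; apply/existsP; exists a; by rewrite inE ain.
- move=> HP k i.
  have [ik|ki] := leqP i k; last first.
    apply: regular_ext (regular_empty _) => w; split => // [[t [[y [_ [sl nu]]] _]]].
    have := proj1 (sum_le_nu k (proj2 nu)) sl; rewrite size_tuple; lia.
  pose L := fun v (w : seq {ffun 'I_i -> option Sigma}) =>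
    exists Ei : sumn v = i, exists u, (exists s, @P_v v Y s /\ u = rep_tuple S s)
      /\ w = map (rx (fv Ei)) u.
  have R : regular (fun w => exists v, v \in comps i /\ L v w).
    apply: regular_bigunion => v; rewrite mem_filter => /andP[/andP[pv /eqP Ei] _].
    have [g fg] := section_of (fv_surj Ei pv).
    apply: regular_ext (regular_image (rx_inj fg) (HP v pv)) => w; split.
      by move=> [u [Hu ->]]; exists Ei, u.
    move=> [Ei' [u [Hu ->]]]; exists u; split => //.
    by rewrite (eq_irrelevance Ei' Ei).
  apply: regular_ext R => w; split.
  + move=> [v [vc [Ei [u [[s [[y [N [Yy [supp [ev sv]]]]] ->]] ->]]]]].
    move: vc; rewrite mem_filter => /andP[/andP[pv _] _].
    have [pe Esz ss sp cnt] := PtoN supp.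
    rewrite ev sv in pe Esz ss sp cnt.
    exists (pushT s (fv Ei)); split; last by rewrite R1 //; exact: fv_surj.
    exists y; split => //.
    have Evt : val (pushT s (fv Ei)) = push v s by rewrite val_pushT.
    split; last by split; rewrite Evt.
    apply/(sum_le_nu _ cnt); by rewrite size_push ?size_tuple ?Ei.
  + move=> [t [[y [Yy [sl [st cntt]]]] ->]].
    set N := (sumn t).+1.
    have supp : supp_below y N := supp_nu cntt.
    have [pe Esz ss sp cnt] := PtoN supp.
    set v := e_of y N in pe Esz ss sp cnt; set s := s_of y N in Esz ss sp cnt.
    have Et : val t = push v s.
      apply: (sorted_eq leq_trans anti_leq) => //.
      apply/allP => x _ /=; by rewrite -cnt -cntt.
    have Ei : sumn v = i by rewrite -(size_tuple t) Et size_push.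
    have Esz' : size s == size v by apply/eqP.
    pose sT : (size v).-tuple nat := Tuple Esz'.
    exists v; split; first exact: mem_comps.
    exists Ei, (rep_tuple S sT); split.
      by exists sT; split => //; exists y, N.
    rewrite -R1; last exact: fv_surj.
    congr (rep_tuple S _); apply: val_inj; by rewrite val_pushT.
Qed.
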